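(* There exists an orthogonal design $OD\big(2^{10};\ 2^6_{(16)}\big)$, i.e. a $2^{10}\times2^{10}$ matrix $X$ with entries in $\{0,\pm z_1,\ldots,\pm z_{16}\}$ such that $XX^{\rm T}=\big(2^6\sum_{i=1}^{16}z_i^2\big)I_{2^{10}}$.
   Context: The notation $u_{(k)}$ in a type means that $u$ is repeated $k$ times. $z_1,\ldots,z_{16}$ are commuting indeterminates. An orthogonal design $OD(m;c_1,\ldots,c_k)$ is an $m\times m$ matrix with entries from $\{0,\pm z_1,\ldots,\pm z_k\}$ satisfying $XX^{\rm T}=(\sum_j c_jz_j^2)I_m$. *)

(* Defs.v *)
From HB Require Import structures.
From mathcomp Require Import all_boot all_order all_algebra.
Set Implicit Arguments. Unset Strict Implicit. Unset Printing Implicit Defensive.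
Import GRing.Theory.
Local Open Scope ring_scope.

(* An entry of an orthogonal design with k variables: either 0 (None) or
   +/- z_i, encoded as Some (s, i) meaning (-1)^s * z_i. *)
Definition od_entry_t (k : nat) := option (bool * 'I_k).

Definition od_eval (R : pzRingType) (k : nat) (z : 'I_k -> R)
    (e : od_entry_t k) : R :=
  match e with
  | None => 0
  | Some (s, i) => (-1) ^+ s * z i
  end.

(* X is an OD(m; c_1,...,c_k): the identity X X^T = (sum_j c_j z_j^2) I_m
   holds in the commuting indeterminates z_1..z_k, i.e. for every
   evaluation of the z_j in every (nontrivial) commutative ring
   (in particular in the polynomial ring Z[z_1..z_k] itself). *)
Definition is_OD (m k : nat) (c : 'I_k -> nat) (X : 'M[od_entry_t k]_m) : Prop :=
  forall (R : comNzRingType) (z : 'I_k -> R),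
    let Xz := map_mx (od_eval z) X in
    Xz *m Xz^T = (\sum_(j < k) (c j)%:R * z j ^+ 2)%:M.

(* Main.v *)
Require Import Defs.
From mathcomp Require Import all_boot all_order all_algebra.
From mathcomp Require Import ring.
Set Implicit Arguments. Unset Strict Implicit. Unset Printing Implicit Defensive.
Import GRing.Theory.
Local Open Scope ring_scope.

Definition Fv (n : nat) := {ffun 'I_n -> bool}.
Definition xorf n (x y : Fv n) : Fv n := [ffun k => x k (+) y k].
Definition dot n (x y : Fv n) : bool := \big[addb/false]_(k < n) (x k && y k).

Lemma xorfA n (x y w : Fv n) : xorf x (xorf y w) = xorf (xorf x y) w.
Proof. by apply/ffunP => k; rewrite !ffunE addbA. Qed.
Lemma xorfC n (x y : Fv n) : xorf x y = xorf y x.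
Proof. by apply/ffunP => k; rewrite !ffunE addbC. Qed.
Lemma xorfK n (x y : Fv n) : xorf x (xorf x y) = y.
Proof. by apply/ffunP => k; rewrite !ffunE addKb. Qed.
Lemma xorf_inj n (x : Fv n) : injective (xorf x).
Proof. by move=> y w H; rewrite -(xorfK x y) H xorfK. Qed.
Lemma xorf_eq n (x y p q : Fv n) :
  (xorf x p == xorf y q) = (xorf x q == xorf y p).
Proof.
apply/eqP/eqP => H; apply/ffunP => k; move/ffunP: H => /(_ k); rewrite !ffunE;
  by case: (x k); case: (y k); case: (p k); case: (q k).
Qed.
Lemma xorf_eqr n (x y p : Fv n) : (xorf x p == xorf y p) = (x == y).
Proof. by rewrite ![xorf _ p]xorfC (inj_eq (@xorf_inj _ _)). Qed.

Lemma dot_xor n (b x y : Fv n) : dot b (xorf x y) = dot b x (+) dot b y.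
Proof.
rewrite /dot -big_split /=; apply: eq_bigr => k _; rewrite ffunE.
by case: (b k).
Qed.

Section Char.
Variable R : comNzRingType.
Definition sg (b : bool) : R := (-1) ^+ b.
Lemma sgD b1 b2 : sg (b1 (+) b2) = sg b1 * sg b2.
Proof. exact: signr_addb. Qed.
Lemma sgK b : sg b * sg b = 1.
Proof. by rewrite -sgD addbb. Qed.
Lemma sg_dot n (c h : Fv n) : sg (dot c h) = \prod_k sg (c k && h k).
Proof.
rewrite /dot; apply: (big_morph sg sgD); by rewrite /sg expr0.
Qed.

Lemma char_sum n (c c' : Fv n) :
  \sum_(h : Fv n) sg (dot c h) * sg (dot c' h) = (2 ^ n)%:R *+ (c == c').
Proof.
transitivity (\sum_(h : Fv n) \prod_k (sg (c k && h k) * sg (c' k && h k))).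
  by apply: eq_bigr => h _; rewrite !sg_dot big_split.
rewrite -(bigA_distr_bigA (fun k b => sg (c k && b) * sg (c' k && b))) /=.
under eq_bigr => k _ do rewrite big_bool /= !andbT !andbF /sg expr0 mulr1.
case: eqP => [<-|/eqP Hne].
  under eq_bigr => k _ do rewrite -expr2 sqrr_sign.
  by rewrite prodr_const card_ord natrX.
have [k Hk] : exists k, c k != c' k.
  apply/existsP; move: Hne; apply: contraR; rewrite negb_exists => /forallP H.
  by apply/eqP/ffunP => k; move: (H k); rewrite negbK => /eqP.
rewrite (bigD1 k) //=; move: Hk.
by case: (c k); case: (c' k) => //= _; rewrite ?expr1 ?expr0 ?mulN1r ?mulr1 ?mul1r ?addrN ?addNr mul0r.
Qed.
End Char.
Definition mk n (s : seq bool) : Fv n := [ffun k : 'I_n => nth false s k].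
Definition tA : seq (seq bool) :=
  [:: [:: false; false; false; false; false; false];
     [:: false; false; true; true; false; true];
     [:: true; true; false; true; true; true];
     [:: false; false; true; false; true; false];
     [:: false; true; false; true; false; false];
     [:: true; true; false; false; false; false];
     [:: true; false; false; false; true; true];
     [:: true; true; true; false; false; false];
     [:: true; false; false; true; true; false];
     [:: false; false; false; false; false; true];
     [:: false; false; false; false; false; false];
     [:: true; true; false; false; false; false];
     [:: true; true; false; true; false; true];
     [:: true; false; true; true; false; true];
     [:: false; true; true; true; false; false];
     [:: false; false; false; true; false; true]].
Definition tB1 : seq (seq bool) :=
  [:: [:: false; false; false; false];
     [:: false; true; true; true];
     [:: true; true; true; false];
     [:: true; true; false; true];
     [:: true; true; true; false];
     [:: false; false; false; false];
     [:: false; false; true; true];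
     [:: true; true; true; false];
     [:: false; false; false; true];
     [:: false; false; true; true];
     [:: true; false; false; true];
     [:: false; false; false; true];
     [:: false; false; true; true];
     [:: false; true; false; true];
     [:: false; true; true; false];
     [:: false; false; true; false]].
Definition tB2 : seq (seq bool) :=
  [:: [:: false; false; false; false; false; false];
     [:: false; false; false; true; true; false];
     [:: true; true; false; false; true; true];
     [:: false; false; false; false; true; false];
     [:: false; true; false; true; true; true];
     [:: true; false; false; false; false; false];
     [:: true; false; false; false; true; false];
     [:: true; true; false; true; true; true];
     [:: true; true; false; false; true; false];
     [:: false; false; false; false; true; false];
     [:: true; true; true; true; true; false];
     [:: true; true; true; true; true; true];
     [:: true; false; false; false; false; false];
     [:: false; false; true; true; true; false];
     [:: true; true; true; true; true; true];
     [:: false; false; true; true; true; true]].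
Definition i0 : 'I_4 := @Ordinal 4 0 isT.
Definition i1 : 'I_4 := @Ordinal 4 1 isT.
Definition i2 : 'I_4 := @Ordinal 4 2 isT.
Definition i3 : 'I_4 := @Ordinal 4 3 isT.
Definition code4 (a : Fv 4) : nat := (a i0 + 2 * a i1 + 4 * a i2 + 8 * a i3)%N.
Definition A2 (a : Fv 4) : Fv 6 := mk 6 (nth [::] tA (code4 a)).
Definition B1 (a : Fv 4) : Fv 4 := mk 4 (nth [::] tB1 (code4 a)).
Definition B2 (a : Fv 4) : Fv 6 := mk 6 (nth [::] tB2 (code4 a)).

Lemma ffun4 (a : Fv 4) : a = mk 4 [:: a i0; a i1; a i2; a i3].
Proof.
apply/ffunP => -[[|[|[|[|k]]]] Hk] //=; rewrite ffunE /=; congr (a _); exact: val_inj.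
Qed.

Lemma data_cond (a b : Fv 4) : a != b ->
  (dot (B1 a) (xorf a b) (+) dot (B2 a) (xorf (A2 a) (A2 b)))
  (+) (dot (B1 b) (xorf a b) (+) dot (B2 b) (xorf (A2 a) (A2 b))) = true.
Proof.
have -> : (a != b) = ([:: a i0; a i1; a i2; a i3] != [:: b i0; b i1; b i2; b i3]).
  apply/idP/idP; apply: contraNN => /eqP H; apply/eqP.
    by rewrite (ffun4 a) (ffun4 b) H.
  by rewrite H.
rewrite (ffun4 a) (ffun4 b) !ffunE /=.
move: (a i0) (a i1) (a i2) (a i3) (b i0) (b i1) (b i2) (b i3) => x0 x1 x2 x3 y0 y1 y2 y3.
rewrite /dot /A2 /B1 /B2 /code4 !big_ord_recr !big_ord0 /= !ffunE /=.
by case: x0; case: x1; case: x2; case: x3; case: y0; case: y1; case: y2; case: y3.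
Qed.

Definition T := (Fv 4 * Fv 6)%type.
Definition dotT (b g : T) := dot b.1 g.1 (+) dot b.2 g.2.
Definition bet (a : Fv 4) : T := (B1 a, B2 a).
Definition sfun (g h : T) : bool :=
  dot (xorf g.2 (A2 (xorf g.1 h.1))) h.2 (+) dotT (bet (xorf g.1 h.1)) g.

Lemma dotT_xor (bb g w : T) :
  dotT bb (xorf g.1 w.1, xorf g.2 w.2) = dotT bb g (+) dotT bb w.
Proof.
rewrite /dotT /= !dot_xor.
by case: (dot bb.1 g.1); case: (dot bb.2 g.2); case: (dot bb.1 w.1); case: (dot bb.2 w.2).
Qed.

Section Main.
Variable R : comNzRingType.
Variable y : Fv 4 -> R.

Lemma pair_cancel (I : finType) (s : I -> I) (F : I -> R) :
  (forall i, s (s i) = i) -> (forall i, s i != i) ->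
  (forall i, F (s i) = - F i) -> \sum_i F i = 0.
Proof.
move=> sK sN FN.
have sinj : injective s by move=> i j H; rewrite -(sK i) H sK.
rewrite (bigID (fun i => enum_rank i < enum_rank (s i)))%N /=.
rewrite [X in _ + X](reindex_inj sinj) /=.
have -> : \sum_(i | ~~ (enum_rank (s i) < enum_rank (s (s i)))%N) F (s i)
        = \sum_(i | (enum_rank i < enum_rank (s i))%N) - F i.
  apply: eq_big => [i|i _]; last exact: FN.
  rewrite sK -leqNgt leq_eqVlt; case: eqP => //= H.
  move/val_inj/enum_rank_inj: H => H; have := sN i; by rewrite -H eqxx.
by rewrite sumrN subrr.
Qed.

Lemma sg_opp x z : x (+) z = true -> sg R z = - sg R x.
Proof. by case: x; case: z => // _; rewrite /sg ?expr0 ?expr1 ?opprK. Qed.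

Definition ee (g h : T) := sg R (sfun g h) * y (xorf g.1 h.1).

Lemma main_sum (g g' : T) :
  \sum_(h : T) ee g h * ee g' h
  = ((2 ^ 6)%:R * \sum_a y a ^+ 2) *+ (g == g').
Proof.
case: g => g1 g2; case: g' => g1' g2'.
transitivity (\sum_(h1 : Fv 4) \sum_(h2 : Fv 6) ee (g1, g2) (h1, h2) * ee (g1', g2') (h1, h2)).
  by rewrite pair_bigA; apply: eq_bigr => -[h1 h2] _.
transitivity (\sum_(h1 : Fv 4)
   (y (xorf g1 h1) * y (xorf g1' h1) * sg R (dotT (bet (xorf g1 h1)) (g1, g2))
     * sg R (dotT (bet (xorf g1' h1)) (g1', g2')))
   * ((2 ^ 6)%:R *+ (xorf g2 (A2 (xorf g1 h1)) == xorf g2' (A2 (xorf g1' h1))))).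
  apply: eq_bigr => h1 _; rewrite -(char_sum R) mulr_sumr; apply: eq_bigr => h2 _.
  rewrite /ee /sfun /= !sgD; ring.
rewrite (reindex_inj (@xorf_inj _ g1)) /=.
under eq_bigr => a _ do rewrite xorfK.
have [E1|N1] := eqVneq g1 g1'.
  rewrite -E1; under eq_bigr => a _ do rewrite xorfK xorf_eqr.
  rewrite xpair_eqE eqxx /=.
  have [E2|N2] := eqVneq g2 g2'.
    rewrite -E2 mulr1n mulr_sumr; apply: eq_bigr => a _.
    by rewrite -(mulrA (y a * y a)) sgK mulr1 expr2 mulrC.
  by rewrite /= mulr0n; apply: big1 => a _; rewrite mulr0.
rewrite xpair_eqE (negbTE N1) /= mulr0n.
under eq_bigr => a _ do rewrite xorfA.
set d := xorf g1' g1.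
have sN : forall a, xorf d a != a.
  move=> a; apply/negP => /eqP H; move/negP: N1; apply; apply/eqP/ffunP => k.
  by move/ffunP: H => /(_ k); rewrite !ffunE; case: (g1 k); case: (g1' k); case: (a k).
apply: (@pair_cancel _ (xorf d)) => // a; first exact: xorfK.
rewrite xorfK xorf_eq.
case: eqP => E2; last by rewrite !mulr0n !mulr0 oppr0.
set b := xorf d a.
pose w : T := (xorf a b, xorf (A2 a) (A2 b)).
have Hg' : (g1', g2') = (xorf g1 w.1, xorf g2 w.2).
  congr pair; apply/ffunP => k.
    rewrite /w /b /d /= !ffunE.
    by case: (g1 k); case: (g1' k); case: (a k).
  rewrite /w /=; move: E2; move: (A2 a) (A2 b) => p q /ffunP /(_ k).
  rewrite !ffunE.
  by case: (g2 k); case: (g2' k); case: (p k); case: (q k).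
have dT : forall bb, dotT bb (g1', g2') = dotT bb (g1, g2) (+) dotT bb w.
  by move=> bb; rewrite Hg' (dotT_xor bb (g1, g2) w).
rewrite !dT !(sgD R (dotT _ (g1, g2))).
have Hab : a != b by rewrite eq_sym sN.
have Hd : dotT (bet a) w (+) dotT (bet b) w = true := data_cond Hab.
rewrite (sg_opp Hd); ring.
Qed.
End Main.

Lemma cardT : #|{: T}| = (2 ^ 10)%N.
Proof. by rewrite card_prod !card_ffun !card_bool !card_ord. Qed.
Lemma cardF4 : #|{: Fv 4}| = 16%N.
Proof. by rewrite !card_ffun !card_bool !card_ord. Qed.

Definition idx (i : 'I_(2 ^ 10)) : T := enum_val (cast_ord (esym cardT) i).
Definition idxinv (t : T) : 'I_(2 ^ 10) := cast_ord cardT (enum_rank t).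
Lemma idxK : cancel idx idxinv.
Proof. by move=> i; rewrite /idx /idxinv enum_valK cast_ordKV. Qed.
Lemma idxinvK : cancel idxinv idx.
Proof. by move=> t; rewrite /idx /idxinv cast_ordK enum_rankK. Qed.

Definition dec (a : Fv 4) : 'I_16 := cast_ord cardF4 (enum_rank a).
Definition decinv (j : 'I_16) : Fv 4 := enum_val (cast_ord (esym cardF4) j).
Lemma decK : cancel dec decinv.
Proof. by move=> a; rewrite /dec /decinv cast_ordK enum_rankK. Qed.
Lemma decinvK : cancel decinv dec.
Proof. by move=> j; rewrite /dec /decinv enum_valK cast_ordKV. Qed.

Definition Xmat : 'M[od_entry_t 16]_(2 ^ 10) :=
  \matrix_(i, j) Some (sfun (idx i) (idx j), dec (xorf (idx i).1 (idx j).1)).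

Local Close Scope ring_scope.

Theorem theorem5p3 :
  exists X : 'M[od_entry_t 16]_(2 ^ 10)%N, is_OD (fun _ => 2 ^ 6) X.
Proof.
exists Xmat => R z /=; apply/matrixP => i k.
rewrite !mxE.
transitivity (\sum_(h : T) ee (fun a => z (dec a)) (idx i) h * ee (fun a => z (dec a)) (idx k) h)%R.
  rewrite (reindex idx) /=; last by exists idxinv => t _; [exact: idxK | exact: idxinvK].
  by apply: eq_bigr => j _; rewrite !mxE.
rewrite main_sum (inj_eq (can_inj idxK)) -mulr_sumr.
congr (_ *+ _)%R; congr (_ * _)%R.
rewrite (reindex dec) //=; exists decinv => t _; [exact: decK | exact: decinvK].
Qed.
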